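(* Let $u$ be a quasi-definite linear functional on $\mathbb C[\boldsymbol x]$, let $\boldsymbol x_1,\dots,\boldsymbol x_q\in\mathbb R^D$ be distinct, $\xi_1,\dots,\xi_q\in\mathbb C$, and $\hat u=u+\sum_{i=1}^q\xi_i\delta(\boldsymbol x-\boldsymbol x_i)$ (i.e. $\langle\hat u,P\rangle=\langle u,P\rangle+\sum_i\xi_iP(\boldsymbol x_i)$), assumed quasi-definite. Let $M$ be the $q\times q$ matrix with entries $M_{ij}=\delta_{ij}+\xi_iK_{n-1}(\boldsymbol x_i,\boldsymbol x_j)$. Then for $n\ge1$ $$\hat P_{[n]}(\boldsymbol x)=\Theta_*\begin{pmatrix}M&\begin{matrix}\xi_1K_{n-1}(\boldsymbol x_1,\boldsymbol x)\\ \vdots\\ \xi_qK_{n-1}(\boldsymbol x_q,\boldsymbol x)\end{matrix}\\ \begin{matrix}P_{[n]}(\boldsymbol x_1)&\cdots&P_{[n]}(\boldsymbol x_q)\end{matrix}&P_{[n]}(\boldsymbol x)\end{pmatrix},\qquad \hat H_{[n]}=\Theta_*\begin{pmatrix}M&\begin{matrix}-\xi_1P_{[n]}(\boldsymbol x_1)^\top\\ \vdots\\ -\xi_qP_{[n]}(\boldsymbol x_q)^\top\end{matrix}\\ \begin{matrix}P_{[n]}(\boldsymbol x_1)&\cdots&P_{[n]}(\boldsymbol x_q)\end{matrix}&H_{[n]}\end{pmatrix}.$$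
   Context: Multi-indices ordered by graded lexicographic order; $\chi(\boldsymbol x)$ the semi-infinite vector of monomials with blocks $\chi_{[k]}$. For a linear functional $u$ on $\mathbb C[\boldsymbol x]$, moment matrix $G=\langle u,\chi\chi^\top\rangle$; quasi-definite: all block truncations nonsingular; then $G=S^{-1}HS^{-\top}$, $S$ block lower unitriangular, $H$ block diagonal with blocks $H_{[k]}$; $P=S\chi$ with blocks $P_{[k]}$ (column vectors of polynomials) are the monic orthogonal polynomials; hats refer to $\hat u$. $K_{n-1}(\boldsymbol x,\boldsymbol y)=\sum_{m=0}^{n-1}P_{[m]}(\boldsymbol x)^\top H_{[m]}^{-1}P_{[m]}(\boldsymbol y)$. Last quasi-determinant: $\Theta_*\begin{pmatrix}A&B\\C&D\end{pmatrix}=D-CA^{-1}B$. *)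

(* Defs.v *)
From HB Require Import structures.
From mathcomp Require Import all_boot all_order all_algebra.
From mathcomp Require Import mpoly.
Set Implicit Arguments.
Unset Strict Implicit.
Unset Printing Implicit Defensive.
Import Order.TTheory GRing.Theory Num.Theory.
Local Open Scope ring_scope.

Section Defs.
Variable C : numClosedFieldType.   (* the complex numbers (any such field) *)
Variable D : nat.

(* Graded lexicographic order inside a block of fixed total degree:
   a comes before b iff at the first coordinate where they differ, a_i > b_i
   (so x_1 > x_2 > ... > x_D). *)
Definition lex_before (a b : 'X_{1..D}) : bool :=
  [exists i : 'I_D, (b i < a i)%N && [forall j : 'I_D, (j < i)%N ==> (a j == b j)]].

Definition mons (k : nat) : seq 'X_{1..D} :=
  sort (fun a b => (a == b) || lex_before a b)
    [seq val m | m <- enum {: 'X_{1..D < k.+1}} & mdeg (val m) == k].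

Definition N (k : nat) : nat := size (mons k).

Definition mon (k : nat) (i : 'I_(N k)) : 'X_{1..D} := nth 0%MM (mons k) i.

Definition chi (k : nat) : 'cV[{mpoly C[D]}]_(N k) := \col_(i < N k) 'X_[mon i].

Definition lin_functional (u : {mpoly C[D]} -> C) : Prop :=
  forall (a : C) (p r : {mpoly C[D]}), u (a *: p + r) = a * u p + u r.

(* block (k,l) of the moment matrix G = <u, chi chi^T> *)
Definition Gblock (u : {mpoly C[D]} -> C) (k l : nat) : 'M[C]_(N k, N l) :=
  \matrix_(i < N k, j < N l) u ('X_[mon i] * 'X_[mon j]).

Definition Gtrunc (u : {mpoly C[D]} -> C) (n : nat) :=
  \mxblock_(i < n.+1, j < n.+1) Gblock u i j.

Definition quasi_definite (u : {mpoly C[D]} -> C) : Prop :=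
  forall n : nat, Gtrunc u n \in unitmx.

(* Gauss--Borel factorization G = S^{-1} H S^{-T}, written as S G S^T = H,
   with S block lower unitriangular (blocks S k l) and H block diagonal
   (diagonal blocks H k). *)
Definition gauss_borel (u : {mpoly C[D]} -> C)
    (S : forall k l : nat, 'M[C]_(N k, N l)) (H : forall k : nat, 'M[C]_(N k)) : Prop :=
  [/\ forall k, S k k = 1%:M,
      forall k l, (k < l)%N -> S k l = 0,
      forall k l, k != l ->
        \sum_(a < k.+1) \sum_(b < l.+1) S k a *m Gblock u a b *m (S l b)^T = 0
    & forall k,
        \sum_(a < k.+1) \sum_(b < k.+1) S k a *m Gblock u a b *m (S k b)^T = H k].

Definition Pol (S : forall k l : nat, 'M[C]_(N k, N l)) (k : nat)
    : 'cV[{mpoly C[D]}]_(N k) :=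
  \col_(i < N k) \sum_(a < k.+1) \sum_(j < N a) S k a i j *: 'X_[mon j].

Definition evP (S : forall k l : nat, 'M[C]_(N k, N l)) (k : nat) (x : 'I_D -> C)
    : 'cV[C]_(N k) := map_mx (fun p => p.@[x]) (Pol S k).

(* Kn1 S H n x y = K_{n-1}(x,y) = sum_{m=0}^{n-1} P_[m](x)^T H_[m]^{-1} P_[m](y) *)
Definition Kn1 (S : forall k l : nat, 'M[C]_(N k, N l)) (H : forall k : nat, 'M[C]_(N k))
    (n : nat) (x y : 'I_D -> C) : C :=
  \sum_(m < n) ((evP S m x)^T *m invmx (H m) *m evP S m y) 0 0.

Definition uvarov (u : {mpoly C[D]} -> C) (q : nat) (xi : 'I_q -> C)
    (pts : 'I_q -> 'I_D -> C) (p : {mpoly C[D]}) : C :=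
  u p + \sum_(i < q) xi i * p.@[pts i].

End Defs.

Definition Theta_star (R : comUnitRingType) (q r s : nat)
    (A : 'M[R]_q) (B : 'M[R]_(q, s)) (Cm : 'M[R]_(r, q)) (Dm : 'M[R]_(r, s))
    : 'M[R]_(r, s) := Dm - Cm *m invmx A *m B.

(* Main.v *)
Require Import Defs.
From HB Require Import structures.
From mathcomp Require Import all_boot all_order all_algebra.
From mathcomp Require Import mpoly.
From mathcomp Require Import ring.
Set Implicit Arguments.
Unset Strict Implicit.
Unset Printing Implicit Defensive.
Import Order.TTheory GRing.Theory Num.Theory.
Local Open Scope ring_scope.


Lemma mons_uniq (D k : nat) : uniq (mons D k).
Proof.
rewrite /mons sort_uniq map_inj_uniq; last exact: val_inj.
by rewrite filter_uniq // enum_uniq.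
Qed.

Lemma mem_mons (D k : nat) (m : 'X_{1..D}) : (m \in mons D k) = (mdeg m == k).
Proof.
rewrite /mons mem_sort; apply/mapP/idP.
  by case=> x; rewrite mem_filter => /andP[H _] ->.
move=> /eqP Hm.
have Hb : (mdeg m < k.+1)%N by rewrite Hm.
exists (BMultinom Hb) => //.
by rewrite mem_filter /= Hm eqxx mem_enum.
Qed.

Lemma mon_deg (D k : nat) (i : 'I_(N D k)) : mdeg (mon i) = k.
Proof.
apply/eqP; rewrite -mem_mons /mon; apply: mem_nth; exact: ltn_ord.
Qed.

Lemma mon_inj (D k : nat) : injective (@mon D k).
Proof.
move=> i j; rewrite /mon => /eqP; rewrite nth_uniq ?mons_uniq //.
  by move/eqP/val_inj.
Qed.

Lemma mon_surj (D k : nat) (m : 'X_{1..D}) : mdeg m = k -> exists i : 'I_(N D k), mon i = m.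
Proof.
move=> Hm; have Hin : m \in mons D k by rewrite mem_mons Hm.
have Hi : (index m (mons D k) < N D k)%N by rewrite /N index_mem.
by exists (Ordinal Hi); rewrite /mon /= nth_index.
Qed.

Lemma mon_eq (D k l : nat) (i : 'I_(N D k)) (j : 'I_(N D l)) :
  (mon i == mon j) = (k == l) && (val i == val j).
Proof.
apply/eqP/andP.
  move=> E; have kl : k = l by rewrite -(mon_deg i) -(mon_deg j) E.
  subst l; split => //; apply/eqP; congr val; exact: mon_inj.
case=> /eqP kl; subst l => /eqP ij.
by congr mon; apply: val_inj.
Qed.



Definition low (C : numClosedFieldType) (D k : nat) (p : {mpoly C[D]}) :=
  forall m : 'X_{1..D}, (k <= mdeg m)%N -> p@_m = 0.

Lemma repr_low (C : numClosedFieldType) (D k : nat) (p : {mpoly C[D]}) :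
  low k p -> p = \sum_(a < k) \sum_(i < N D a) p@_(mon i) *: 'X_[mon i].
Proof.
move=> Hp; apply/mpolyP => m; rewrite raddf_sum /=.
under eq_bigr do rewrite raddf_sum /=.
under eq_bigr do under eq_bigr do rewrite mcoeffZ mcoeffX.
case: (ltnP (mdeg m) k) => Hk; last first.
  rewrite Hp //; symmetry; apply: big1 => a _; apply: big1 => i _.
  have -> : (mon i == m) = false.
    by apply/negbTE/eqP => E; move: Hk; rewrite -E mon_deg leqNgt ltn_ord.
  by rewrite mulr0.
pose a0 := Ordinal Hk.
rewrite (bigD1 a0) //= [X in _ + X]big1 ?addr0; last first.
  move=> a Ha; apply: big1 => i _.
  have -> : (mon i == m) = false.
    apply/negbTE/eqP => E; move: Ha; rewrite -val_eqE /= -E mon_deg eqxx //.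
  by rewrite mulr0.
have [i0 Hi0] := mon_surj (k := a0) (erefl (mdeg m)).
rewrite (bigD1 i0) //= [X in _ + X]big1 ?addr0; last first.
  move=> i Hi; have -> : (mon i == m) = false.
    by apply/negbTE/eqP => E; move: Hi; rewrite -E in Hi0; rewrite (mon_inj Hi0) eqxx.
  by rewrite mulr0.
by rewrite Hi0 eqxx mulr1.
Qed.

Lemma low_mono (C : numClosedFieldType) (D k l : nat) (p : {mpoly C[D]}) :
  (k <= l)%N -> low k p -> low l p.
Proof. by move=> kl Hp m Hm; apply: Hp; exact: leq_trans Hm. Qed.

Lemma low0 (C : numClosedFieldType) (D k : nat) : low k (0 : {mpoly C[D]}).
Proof. by move=> m _; rewrite mcoeff0. Qed.

Lemma lowD (C : numClosedFieldType) (D k : nat) (p q : {mpoly C[D]}) :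
  low k p -> low k q -> low k (p + q).
Proof. by move=> Hp Hq m Hm; rewrite mcoeffD Hp // Hq // addr0. Qed.

Lemma lowN (C : numClosedFieldType) (D k : nat) (p : {mpoly C[D]}) :
  low k p -> low k (- p).
Proof. by move=> Hp m Hm; rewrite mcoeffN Hp // oppr0. Qed.

Lemma lowB (C : numClosedFieldType) (D k : nat) (p q : {mpoly C[D]}) :
  low k p -> low k q -> low k (p - q).
Proof. by move=> Hp Hq; apply: lowD => //; exact: lowN. Qed.

Lemma lowZ (C : numClosedFieldType) (D k : nat) (c : C) (p : {mpoly C[D]}) :
  low k p -> low k (c *: p).
Proof. by move=> Hp m Hm; rewrite mcoeffZ Hp // mulr0. Qed.

Lemma low_sum (C : numClosedFieldType) (D k : nat) (I : Type) (r : seq I) (P : pred I)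
  (F : I -> {mpoly C[D]}) :
  (forall i, P i -> low k (F i)) -> low k (\sum_(i <- r | P i) F i).
Proof.
move=> H; elim/big_rec: _ => [|i x Pi Hx]; first exact: low0.
by apply: lowD => //; exact: H.
Qed.

Lemma lowX (C : numClosedFieldType) (D k : nat) (m : 'X_{1..D}) :
  (mdeg m < k)%N -> low k ('X_[m] : {mpoly C[D]}).
Proof.
move=> Hm m' Hm'; rewrite mcoeffX; case: eqP => // E.
by move: Hm'; rewrite -E leqNgt Hm.
Qed.

Section Lin.
End Lin.

Lemma lw0 (C : numClosedFieldType) (D : nat) (w : {mpoly C[D]} -> C) :
  lin_functional w -> w 0 = 0.
Proof.
move=> Hw; have := Hw 1 0 0; rewrite scaler0 addr0 mul1r => E.
by apply: (addrI (w 0)); rewrite addr0 -E.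
Qed.

Lemma lwD (C : numClosedFieldType) (D : nat) (w : {mpoly C[D]} -> C) p r :
  lin_functional w -> w (p + r) = w p + w r.
Proof. by move=> Hw; rewrite -[p]scale1r Hw mul1r scale1r. Qed.

Lemma lwZ (C : numClosedFieldType) (D : nat) (w : {mpoly C[D]} -> C) a p :
  lin_functional w -> w (a *: p) = a * w p.
Proof. by move=> Hw; rewrite -[a *: p]addr0 Hw (lw0 Hw) addr0. Qed.

Lemma lwN (C : numClosedFieldType) (D : nat) (w : {mpoly C[D]} -> C) p :
  lin_functional w -> w (- p) = - w p.
Proof. by move=> Hw; rewrite -scaleN1r lwZ // mulN1r. Qed.

Lemma lwB (C : numClosedFieldType) (D : nat) (w : {mpoly C[D]} -> C) p r :
  lin_functional w -> w (p - r) = w p - w r.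
Proof. by move=> Hw; rewrite lwD // lwN. Qed.

Lemma lw_sum (C : numClosedFieldType) (D : nat) (w : {mpoly C[D]} -> C)
  (I : Type) (r : seq I) (P : pred I) (F : I -> {mpoly C[D]}) :
  lin_functional w -> w (\sum_(i <- r | P i) F i) = \sum_(i <- r | P i) w (F i).
Proof.
move=> Hw; elim/big_rec2: _ => [|i y x Pi <-]; first exact: lw0.
exact: lwD.
Qed.

Lemma uvarov_lin (C : numClosedFieldType) (D : nat) (u : {mpoly C[D]} -> C) q
  (xi : 'I_q -> C) pts : lin_functional u -> lin_functional (uvarov u xi pts).
Proof.
move=> Hu a p r; rewrite /uvarov Hu mulrDr.
rewrite mulr_sumr.
have -> : \sum_(i < q) xi i * (a *: p + r).@[pts i] =
  \sum_(i < q) a * (xi i * p.@[pts i]) + \sum_(i < q) xi i * r.@[pts i].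
  by rewrite -big_split /=; apply: eq_bigr => i _; rewrite mevalD mevalZ; ring.
ring.
Qed.



Definition Pol0 (C : numClosedFieldType) (D : nat)
  (S : forall k l : nat, 'M[C]_(N D k, N D l)) (k : nat) (r : 'I_(N D k)) : {mpoly C[D]} :=
  Pol S k r 0.
Arguments Pol0 {C D} S k r.

Lemma PolE (C : numClosedFieldType) (D : nat) (S : forall k l : nat, 'M[C]_(N D k, N D l)) k r :
  Pol0 S k r = \sum_(a < k.+1) \sum_(j < N D a) S k a r j *: 'X_[mon j].
Proof. by rewrite /Pol0 /Pol mxE. Qed.

Lemma Pol_split (C : numClosedFieldType) (D : nat) (S : forall k l : nat, 'M[C]_(N D k, N D l)) k r :
  S k k = 1%:M ->
  Pol0 S k r = 'X_[mon r] + \sum_(a < k) \sum_(j < N D a) S k a r j *: 'X_[mon j].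
Proof.
move=> Skk; rewrite PolE big_ord_recr /= addrC; congr (_ + _).
rewrite Skk (bigD1 r) //= [X in _ + X]big1 ?addr0; first by rewrite mxE eqxx scale1r.
by move=> j /negbTE jr; rewrite mxE eq_sym jr scale0r.
Qed.

Lemma low_Pol (C : numClosedFieldType) (D : nat) (S : forall k l : nat, 'M[C]_(N D k, N D l)) k r :
  low k.+1 (Pol0 S k r).
Proof.
rewrite PolE; apply: low_sum => a _; apply: low_sum => j _; apply: lowZ.
by apply: lowX; rewrite mon_deg.
Qed.

Lemma low_Pol_sub (C : numClosedFieldType) (D : nat) (S : forall k l : nat, 'M[C]_(N D k, N D l)) k r :
  S k k = 1%:M -> low k (Pol0 S k r - 'X_[mon r]).
Proof.
move=> Skk; rewrite Pol_split // [X in X - _]addrC addrK.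
apply: low_sum => a _; apply: low_sum => j _; apply: lowZ.
by apply: lowX; rewrite mon_deg.
Qed.

Lemma coef_Pol_top (C : numClosedFieldType) (D : nat) (S : forall k l : nat, 'M[C]_(N D k, N D l)) k r s :
  (Pol0 S k r)@_(mon s) = S k k r s.
Proof.
rewrite PolE raddf_sum big_ord_recr /= big1 ?add0r.
  rewrite raddf_sum (bigD1 s) //= big1 ?addr0.
    by rewrite /= mcoeffZ mcoeffX eqxx mulr1.
  move=> j js; rewrite /= mcoeffZ mcoeffX mon_eq eqxx /=.
  by rewrite val_eqE (negbTE js) mulr0.
move=> a _; rewrite raddf_sum big1 // => j _.
rewrite /= mcoeffZ mcoeffX mon_eq.
by rewrite (_ : (a == k :> nat) = false) ?mulr0 //; apply/negbTE; rewrite neq_ltn ltn_ord.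
Qed.

Lemma gb_entry (C : numClosedFieldType) (D : nat) (w : {mpoly C[D]} -> C)
  (S : forall k l : nat, 'M[C]_(N D k, N D l)) k l r s :
  lin_functional w ->
  w (Pol0 S k r * Pol0 S l s) =
  (\sum_(a < k.+1) \sum_(b < l.+1) S k a *m Gblock w a b *m (S l b)^T) r s.
Proof.
move=> Hw; rewrite !PolE mulr_suml lw_sum // summxE.
apply: eq_bigr => a _; rewrite summxE mulr_suml lw_sum //.
under eq_bigr => j _ do rewrite mulr_sumr lw_sum //.
under [RHS]eq_bigr => b _ do rewrite mxE.
under [RHS]eq_bigr => b _ do under eq_bigr => j' _ do rewrite !mxE big_distrl /=.
under [RHS]eq_bigr => b _ do rewrite exchange_big /=.
rewrite [RHS]exchange_big /=; apply: eq_bigr => j _.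
apply: eq_bigr => b _; rewrite mulr_sumr lw_sum //; apply: eq_bigr => j' _.
rewrite -scalerAl -scalerAr scalerA lwZ // !mxE; ring.
Qed.

Lemma gbo (C : numClosedFieldType) (D : nat) (w : {mpoly C[D]} -> C)
  (S : forall k l : nat, 'M[C]_(N D k, N D l)) (H : forall k : nat, 'M[C]_(N D k)) k l r s :
  lin_functional w -> gauss_borel w S H -> k != l -> w (Pol0 S k r * Pol0 S l s) = 0.
Proof. by move=> Hw [_ _ Ho _] kl; rewrite gb_entry // Ho // mxE. Qed.

Lemma gbd (C : numClosedFieldType) (D : nat) (w : {mpoly C[D]} -> C)
  (S : forall k l : nat, 'M[C]_(N D k, N D l)) (H : forall k : nat, 'M[C]_(N D k)) k r s :
  lin_functional w -> gauss_borel w S H -> w (Pol0 S k r * Pol0 S k s) = H k r s.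
Proof. by move=> Hw [_ _ _ Hd]; rewrite gb_entry // Hd. Qed.

Lemma orth_mon (C : numClosedFieldType) (D : nat) (w : {mpoly C[D]} -> C)
  (S : forall k l : nat, 'M[C]_(N D k, N D l)) (H : forall k : nat, 'M[C]_(N D k)) f k :
  lin_functional w -> gauss_borel w S H ->
  (forall l (s : 'I_(N D l)), (l < k)%N -> w (f * Pol0 S l s) = 0) ->
  forall m, (mdeg m < k)%N -> w (f * 'X_[m]) = 0.
Proof.
move=> Hw [Sd _ _ _] Hf.
suff Hs : forall d, (d < k)%N -> forall s : 'I_(N D d), w (f * 'X_[mon s]) = 0.
  by move=> m Hm; have [s <-] := mon_surj (erefl (mdeg m)); apply: Hs.
elim/ltn_ind => d IH dk s.
have -> : 'X_[mon s] = Pol0 S d s - \sum_(a < d) \sum_(j < N D a) S d a s j *: 'X_[mon j].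
  by rewrite Pol_split // addrK.
rewrite mulrBr lwB // Hf // mulr_sumr lw_sum // big1 ?subr0 // => a _.
rewrite mulr_sumr lw_sum // big1 // => j _.
have ad : (a < k)%N by apply: ltn_trans (ltn_ord a) dk.
by rewrite -scalerAr lwZ // IH ?mulr0.
Qed.

Lemma orth_low (C : numClosedFieldType) (D : nat) (w : {mpoly C[D]} -> C)
  (S : forall k l : nat, 'M[C]_(N D k, N D l)) (H : forall k : nat, 'M[C]_(N D k)) k r h :
  lin_functional w -> gauss_borel w S H -> low k h -> w (Pol0 S k r * h) = 0.
Proof.
move=> Hw Hgb Hh; rewrite (repr_low Hh) mulr_sumr lw_sum // big1 // => a _.
rewrite mulr_sumr lw_sum // big1 // => i _.
rewrite -scalerAr lwZ // (@orth_mon _ _ _ _ _ _ k Hw Hgb) ?mulr0 //; last by rewrite mon_deg.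
move=> l s lk; apply: (gbo _ _ Hw Hgb).
by rewrite neq_ltn lk orbT.
Qed.



Lemma unit_ker (F : fieldType) (n : nat) (A : 'M[F]_n) :
  (forall v : 'rV_n, v *m A = 0 -> v = 0) -> A \in unitmx.
Proof.
move=> Hv; rewrite -row_free_unit -kermx_eq0; apply/eqP/row_matrixP => i.
by rewrite row0; apply: Hv; rewrite -row_mul mulmx_ker row0.
Qed.

Lemma nondeg (C : numClosedFieldType) (D : nat) (w : {mpoly C[D]} -> C) k f :
  lin_functional w -> quasi_definite w -> low k.+1 f ->
  (forall m, (mdeg m <= k)%N -> w (f * 'X_[m]) = 0) -> f = 0.
Proof.
move=> Hw Hq Hf Ho.
pose c : 'rV[C]_(\sum_(a < k.+1) N D a) :=
  \mxrow_(a < k.+1) (\row_(i < N D a) f@_(mon i)).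
have Hc : c *m Gtrunc w k = 0.
  rewrite /Gtrunc mul_mxrow_mxblock.
  transitivity (\mxrow_(b < k.+1) (0 : 'rV[C]_(N D b))); last by rewrite mxrow0.
  apply: eq_mxrow => b; apply/rowP => j; rewrite summxE mxE.

  rewrite -[RHS](Ho (mon j)); last by rewrite mon_deg -ltnS.
  rewrite [in RHS](repr_low Hf) mulr_suml lw_sum //; apply: eq_bigr => a _.
  rewrite mxE mulr_suml lw_sum //; apply: eq_bigr => i _.
  by rewrite -scalerAl lwZ // !mxE.
have c0 : c = 0.
  by rewrite -[c](mulmxK (Hq k)) Hc mul0mx.
rewrite (repr_low Hf) big1 // => a _; rewrite big1 // => i _.
have := congr1 (fun M => submxrow M a) c0; rewrite mxrowK submxrow0.
by move=> /rowP /(_ i); rewrite !mxE => ->; rewrite scale0r.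
Qed.

Lemma Hunit (C : numClosedFieldType) (D : nat) (w : {mpoly C[D]} -> C)
  (S : forall k l : nat, 'M[C]_(N D k, N D l)) (H : forall k : nat, 'M[C]_(N D k)) k :
  lin_functional w -> quasi_definite w -> gauss_borel w S H -> H k \in unitmx.
Proof.
move=> Hw Hq Hgb; apply: unit_ker => v Hv.
pose f := \sum_(r < N D k) v 0 r *: Pol0 S k r.
have f0 : f = 0.
  apply: (@nondeg _ _ w k) => //.
    by apply: low_sum => r _; apply: lowZ; apply: low_Pol.
  move=> m Hm; apply: (@orth_mon _ _ _ _ _ _ k.+1 Hw Hgb) => // l s lk.
  rewrite /f mulr_suml lw_sum //.
  case: (eqVneq l k) => [lk'|lk'].
    subst l; have := congr1 (fun M : 'rV[C]_(N D k) => M 0 s) Hv; rewrite !mxE => E; rewrite -[RHS]E.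
    by apply: eq_bigr => r _; rewrite -scalerAl lwZ // (gbd _ _ Hw Hgb).
  by rewrite big1 // => r _; rewrite -scalerAl lwZ // (gbo _ _ Hw Hgb) ?mulr0 // eq_sym.
apply/rowP => s; have := congr1 (mcoeff (mon s)) f0.
rewrite /f raddf_sum mcoeff0 (bigD1 s) //= big1 ?addr0.
  by rewrite mcoeffZ coef_Pol_top; case: Hgb => -> _ _ _; rewrite mxE eqxx mulr1 mxE.
move=> r rs; rewrite mcoeffZ coef_Pol_top; case: Hgb => -> _ _ _.
by rewrite mxE (negbTE rs) mulr0.
Qed.

Lemma Hsym (C : numClosedFieldType) (D : nat) (w : {mpoly C[D]} -> C)
  (S : forall k l : nat, 'M[C]_(N D k, N D l)) (H : forall k : nat, 'M[C]_(N D k)) k :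
  lin_functional w -> gauss_borel w S H -> (H k)^T = H k.
Proof.
move=> Hw Hgb; apply/matrixP => r s; rewrite mxE.
by rewrite -(gbd s r Hw Hgb) -(gbd r s Hw Hgb) mulrC.
Qed.

Lemma expand (C : numClosedFieldType) (D : nat) (w : {mpoly C[D]} -> C)
  (S : forall k l : nat, 'M[C]_(N D k, N D l)) (H : forall k : nat, 'M[C]_(N D k)) k f :
  lin_functional w -> quasi_definite w -> gauss_borel w S H -> low k f ->
  f = \sum_(l < k) \sum_(s < N D l)
        ((\row_(s' < N D l) w (f * Pol0 S l s')) *m invmx (H l)) 0 s *: Pol0 S l s.
Proof.
move=> Hw Hq Hgb Hf; apply/eqP; rewrite -subr_eq0; apply/eqP.
case: k Hf => [|k] Hf.
  by rewrite big_ord0 subr0 (repr_low Hf) big_ord0.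
apply: (@nondeg _ _ w k) => //.
  apply: lowB => //; apply: low_sum => l _; apply: low_sum => s _; apply: lowZ.
  by apply: low_mono (low_Pol S s); apply: ltn_ord.
move=> m Hm; apply: (@orth_mon _ _ _ _ _ _ k.+1 Hw Hgb) => // l s lk.
rewrite mulrBl lwB // mulr_suml lw_sum // (bigD1 (Ordinal lk)) //= [X in _ - (_ + X)]big1 ?addr0.
  rewrite mulr_suml lw_sum //.
  under eq_bigr => s' _ do rewrite -scalerAl lwZ // (gbd _ _ Hw Hgb).
  have := congr1 (fun M : 'rV[C]_(N D l) => M 0 s)
    (mulmxKV (Hunit l Hw Hq Hgb) (\row_(s' < N D l) w (f * Pol0 S l s'))).
  by rewrite !mxE => E; rewrite [X in _ - X]E subrr.
move=> l' Hl'; rewrite mulr_suml lw_sum // big1 // => s' _.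
rewrite -scalerAl lwZ // (gbo _ _ Hw Hgb) ?mulr0 //.
Qed.

Definition Kp (C : numClosedFieldType) (D : nat)
  (S : forall k l : nat, 'M[C]_(N D k, N D l)) (H : forall k : nat, 'M[C]_(N D k))
  (n : nat) (y : 'I_D -> C) : {mpoly C[D]} :=
  \sum_(l < n) \sum_(s < N D l) ((evP S l y)^T *m invmx (H l)) 0 s *: Pol0 S l s.

Lemma low_Kp (C : numClosedFieldType) (D : nat)
  (S : forall k l : nat, 'M[C]_(N D k, N D l)) (H : forall k : nat, 'M[C]_(N D k)) n y :
  low n (Kp S H n y).
Proof.
apply: low_sum => l _; apply: low_sum => s _; apply: lowZ.
by apply: low_mono (low_Pol S s); apply: ltn_ord.
Qed.

Lemma eval_Pol (C : numClosedFieldType) (D : nat)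
  (S : forall k l : nat, 'M[C]_(N D k, N D l)) k r x :
  (Pol0 S k r).@[x] = evP S k x r 0.
Proof. by rewrite /evP mxE. Qed.

Lemma meval_sum (C : numClosedFieldType) (D : nat) (x : 'I_D -> C)
  (I : Type) (r : seq I) (P : pred I) (F : I -> {mpoly C[D]}) :
  (\sum_(i <- r | P i) F i).@[x] = \sum_(i <- r | P i) (F i).@[x].
Proof. exact: (big_morph _ (mevalD x) (meval0 x)). Qed.

Lemma Kp_eval (C : numClosedFieldType) (D : nat)
  (S : forall k l : nat, 'M[C]_(N D k, N D l)) (H : forall k : nat, 'M[C]_(N D k)) n y x :
  (Kp S H n y).@[x] = Kn1 S H n y x.
Proof.
rewrite /Kp /Kn1 meval_sum; apply: eq_bigr => l _.
rewrite meval_sum mxE; apply: eq_bigr => s _.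
by rewrite mevalZ eval_Pol.
Qed.

Lemma repro (C : numClosedFieldType) (D : nat) (u : {mpoly C[D]} -> C)
  (S : forall k l : nat, 'M[C]_(N D k, N D l)) (H : forall k : nat, 'M[C]_(N D k)) n f y :
  lin_functional u -> quasi_definite u -> gauss_borel u S H -> low n f ->
  u (f * Kp S H n y) = f.@[y].
Proof.
move=> Hu Hq Hgb Hf.
rewrite [in RHS](expand Hu Hq Hgb Hf) meval_sum /Kp mulr_sumr lw_sum //.
apply: eq_bigr => l _; rewrite meval_sum mulr_sumr lw_sum //.
under eq_bigr => s _ do rewrite -scalerAr lwZ //.
under [RHS]eq_bigr => s _ do rewrite mevalZ eval_Pol.
have HS : (invmx (H l))^T = invmx (H l) by rewrite trmx_inv (Hsym l Hu Hgb).
under eq_bigr => s _ do rewrite mxE big_distrl /=.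
under [RHS]eq_bigr => s _ do rewrite mxE big_distrl /=.
rewrite exchange_big /=; apply: eq_bigr => t _; apply: eq_bigr => s _.
have HS2 : invmx (H l) s t = invmx (H l) t s by rewrite -{1}HS mxE.
rewrite !mxE HS2; ring.
Qed.



Lemma sum_delta (C : numClosedFieldType) q (a : 'I_q -> C) (j : 'I_q) :
  \sum_(i < q) a i * (i == j)%:R = a j.
Proof.
rewrite (bigD1 j) //= eqxx mulr1 big1 ?addr0 // => i /negbTE ->.
by rewrite mulr0.
Qed.

Lemma meval_mul (C : numClosedFieldType) (D : nat) (x : 'I_D -> C) (p r : {mpoly C[D]}) :
  (p * r).@[x] = p.@[x] * r.@[x].
Proof. exact: mevalM. Qed.

Lemma mscalerAl (C : numClosedFieldType) (D : nat) (a : C) (p r : {mpoly C[D]}) :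
  (a *: p) * r = a *: (p * r).
Proof. by rewrite scalerAl. Qed.

Theorem mainTheorem16 (C : numClosedFieldType) (D : nat)
    (u : {mpoly C[D]} -> C) (q : nat) (xi : 'I_q -> C) (pts : 'I_q -> 'I_D -> C)
    (S : forall k l : nat, 'M[C]_(N D k, N D l)) (H : forall k : nat, 'M[C]_(N D k))
    (Sh : forall k l : nat, 'M[C]_(N D k, N D l)) (Hh : forall k : nat, 'M[C]_(N D k)) :
  lin_functional u ->
  quasi_definite u ->
  injective pts ->
  (forall i j, pts i j \is Num.real) ->
  quasi_definite (uvarov u xi pts) ->
  gauss_borel u S H ->
  gauss_borel (uvarov u xi pts) Sh Hh ->
  forall n : nat, (1 <= n)%N ->
  let M := \matrix_(i < q, j < q) ((i == j)%:R + xi i * Kn1 S H n (pts i) (pts j)) in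
  let Prow := \matrix_(r < N D n, i < q) evP S n (pts i) r 0 in
  M \in unitmx /\
  (forall x : 'I_D -> C,
     evP Sh n x =
     Theta_star M (\matrix_(i < q, j < 1) (xi i * Kn1 S H n (pts i) x)) Prow (evP S n x)) /\
  Hh n = Theta_star M (\matrix_(i < q, r < N D n) (- (xi i * evP S n (pts i) r 0))) Prow (H n).
Proof.
move=> Hu Hq _ _ Hqh Hgb Hgbh n n1 M Prow.
have En : n = n.-1.+1 by rewrite prednK.
have Hlh := uvarov_lin xi pts Hu.
set uh := uvarov u xi pts in Hlh Hqh Hgbh *.
have Hrep : forall (m : 'X_{1..D}) y, (mdeg m < n)%N ->
    u (Kp S H n y * 'X_[m]) = ('X_[m]).@[y].
  by move=> m y Hm; rewrite mulrC (repro _ Hu Hq Hgb) //; apply: lowX.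
have Huh : forall p, uh p = u p + \sum_(j < q) xi j * p.@[pts j] by [].
have Munit : M \in unitmx.
  apply: unit_ker => v Hv.
  pose f := \sum_(i < q) (v 0 i * xi i) *: Kp S H n (pts i).
  have fx : forall j, f.@[pts j] = - v 0 j.
    move=> j; rewrite meval_sum.
    under eq_bigr do rewrite mevalZ Kp_eval.
    have := congr1 (fun A : 'rV[C]_q => A 0 j) Hv; rewrite /M !mxE.
    rewrite (eq_bigr (fun i => v 0 i * (i == j)%:R + v 0 i * xi i * Kn1 S H n (pts i) (pts j)));
      last by move=> i _; rewrite mxE; ring.
    rewrite big_split /= sum_delta => E.
    by apply/eqP; rewrite -addr_eq0 addrC E.
  have f0 : f = 0.
    apply: (@nondeg _ _ uh n.-1) => //.
      by rewrite -En; apply: low_sum => i _; apply: lowZ; apply: low_Kp.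
    move=> m Hm; have Hm' : (mdeg m < n)%N by rewrite En ltnS.
    rewrite Huh.
    under [X in _ + X]eq_bigr => j _ do rewrite meval_mul fx.
    rewrite /f mulr_suml lw_sum //.
    rewrite (eq_bigr (fun i => v 0 i * xi i * u (Kp S H n (pts i) * 'X_[m]))); last first.
      move=> i _; rewrite -lwZ //; congr (u _); exact: mscalerAl.
    under eq_bigr do rewrite Hrep //.
    by rewrite -big_split /= big1 // => i _; ring.
  apply/rowP => j; have := fx j; rewrite f0 meval0 mxE => /eqP.
  by rewrite eq_sym oppr_eq0 => /eqP.
split => //.
pose beta := Prow *m invmx M.
have Hbeta : beta *m M = Prow by rewrite mulmxKV.
pose Q (r : 'I_(N D n)) := Pol0 S n r - \sum_(i < q) (beta r i * xi i) *: Kp S H n (pts i).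
have Qx : forall r j, (Q r).@[pts j] = beta r j.
  move=> r j; rewrite mevalB meval_sum eval_Pol.
  under eq_bigr do rewrite mevalZ Kp_eval.
  have := congr1 (fun A : 'M[C]_(N D n, q) => A r j) Hbeta; rewrite /M !mxE.
  rewrite (eq_bigr (fun i => beta r i * (i == j)%:R + beta r i * xi i * Kn1 S H n (pts i) (pts j))); last first.
    by move=> i _; rewrite !mxE; ring.
  rewrite big_split /= sum_delta => <-.
  by rewrite addrK mxE.
have Sh1 : Sh n n = 1%:M by case: Hgbh.
have S1 : S n n = 1%:M by case: Hgb.
have HQ : forall r, Pol0 Sh n r = Q r.
  move=> r; apply/eqP; rewrite -subr_eq0; apply/eqP.
  apply: (@nondeg _ _ uh n.-1) => //.
    rewrite -En; have -> : Pol0 Sh n r - Q r = (Pol0 Sh n r - 'X_[mon r]) - (Pol0 S n r - 'X_[mon r])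
       + \sum_(i < q) (beta r i * xi i) *: Kp S H n (pts i) by rewrite /Q; ring.
    apply: lowD; first by apply: lowB; apply: low_Pol_sub.
    by apply: low_sum => i _; apply: lowZ; apply: low_Kp.
  move=> m Hm; have Hm' : (mdeg m < n)%N by rewrite En ltnS.
  rewrite mulrBl lwB // (orth_low _ Hlh Hgbh); last exact: lowX.
  rewrite sub0r Huh; apply/eqP; rewrite oppr_eq0; apply/eqP.
  under [X in _ + X]eq_bigr => j _ do rewrite meval_mul Qx.
  rewrite /Q mulrBl lwB // (orth_low _ Hu Hgb) ?sub0r; last exact: lowX.
  rewrite mulr_suml lw_sum //.
  rewrite (eq_bigr (fun i => beta r i * xi i * u (Kp S H n (pts i) * 'X_[m]))); last first.
    move=> i _; rewrite -lwZ //; congr (u _); exact: mscalerAl.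
  under eq_bigr do rewrite Hrep //.
  rewrite -sumrN -big_split /= big1 // => i _; ring.
split.
  move=> x; apply/colP => r.
  rewrite -eval_Pol HQ /Q mevalB meval_sum eval_Pol.
  under eq_bigr do rewrite mevalZ Kp_eval.
  rewrite /Theta_star !mxE; congr (_ - _); apply: eq_bigr => i _; rewrite !mxE; ring.
apply/matrixP => r s.
have E1 : uh (Pol0 Sh n r * Pol0 Sh n s) = uh (Pol0 Sh n r * Pol0 S n s).
  have -> : Pol0 Sh n r * Pol0 Sh n s = Pol0 Sh n r * Pol0 S n s +
     Pol0 Sh n r * ((Pol0 Sh n s - 'X_[mon s]) - (Pol0 S n s - 'X_[mon s])) by ring.
  by rewrite lwD // [X in _ + X](orth_low _ Hlh Hgbh) ?addr0 //; apply: lowB; apply: low_Pol_sub.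
have E2 : u (Pol0 Sh n r * Pol0 S n s) = H n r s.
  have -> : Pol0 Sh n r * Pol0 S n s = Pol0 S n s * Pol0 S n r +
     Pol0 S n s * ((Pol0 Sh n r - 'X_[mon r]) - (Pol0 S n r - 'X_[mon r])) by ring.
  rewrite lwD // [X in _ + X](orth_low _ Hu Hgb) ?addr0; last by apply: lowB; apply: low_Pol_sub.
  by rewrite (gbd s r Hu Hgb) -[in RHS](Hsym n Hu Hgb) mxE.
rewrite -(gbd r s Hlh Hgbh) E1 Huh E2.
under [X in _ + X]eq_bigr => j _ do rewrite meval_mul HQ Qx eval_Pol.
rewrite /Theta_star !mxE -sumrN; congr (_ + _); apply: eq_bigr => j _; rewrite !mxE; ring.
Qed.
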